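(* Let $\mathbf{T}\subset\mathbb{S}^3$ be a $\mathbb{Z}_2$-symmetric spherical tetrahedron with dihedral angles $A$, $B=E$, $C=F$, $D$ and edge lengths $l_A$, $l_B=l_E$, $l_C=l_F$, $l_D$. Put $a_+=\cos\frac{l_A+l_D}{2}$, $a_-=\cos\frac{l_A-l_D}{2}$, $b=\cos l_B$, $c=\cos l_C$, and $$\Delta^\star=(a_++a_-+b+c)(a_++a_--b-c)(a_+-a_--b+c)(a_+-a_-+b-c).$$ Then the principal parameter $u=\sqrt{c^\star_{00}c^\star_{22}/\det G^\star}$ of $\mathbf{T}$ is a positive root of the quadratic equation $$u^2+\frac{4\,(a_+a_--bc)(a_+b-a_-c)(a_+c-a_-b)}{\Delta^\star}=1.$$
   Context: A spherical tetrahedron $\mathbf{T}\subset\mathbb{S}^3\subset\mathbb{R}^4$ is the intersection of $\mathbb{S}^3$ with the cone over four linearly independent unit vectors $\mathrm{p}_0,\dots,\mathrm{p}_3$. Edge lengths $l_{ij}\in[0,\pi]$: $\cos l_{ij}=\langle\mathrm{p}_i,\mathrm{p}_j\rangle$; dihedral angles $\alpha_{ij}\in[0,\pi]$: $\cos\alpha_{ij}=-\langle\mathrm{v}_i,\mathrm{v}_j\rangle$ with $\mathrm{v}_i$ the outer unit normal of the face opposite $\mathrm{p}_i$. Notation: $l_A=l_{01}$, $l_B=l_{02}$, $l_C=l_{03}$, $l_D=l_{23}$, $l_E=l_{13}$, $l_F=l_{12}$; $A,\dots,F$ are the dihedral angles along the edges of lengths $l_A,\dots,l_F$. The edge matrix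 is $G^\star=(\langle\mathrm{p}_i,\mathrm{p}_j\rangle)_{i,j=0}^3$ and $c^\star_{ij}$ denotes its $(i,j)$-cofactor $(-1)^{i+j}\det(\text{minor})$. $\mathbf{T}$ is $\mathbb{Z}_2$-symmetric if invariant under rotation through $\pi$ about the axis through the midpoints of the edges $\mathrm{p}_0\mathrm{p}_1$ and $\mathrm{p}_2\mathrm{p}_3$ (so $l_B=l_E$, $l_C=l_F$, $B=E$, $C=F$). *)

(* Defs.v *)
From HB Require Import structures.
From mathcomp Require Import all_boot all_order all_algebra.
From mathcomp Require Import all_classical all_reals all_analysis.
Set Implicit Arguments. Unset Strict Implicit. Unset Printing Implicit Defensive.
Import Order.TTheory GRing.Theory Num.Theory.
Local Open Scope classical_set_scope.
Local Open Scope ring_scope.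

Section SphTetra.
Variable R : realType.

Definition dotv (x y : 'rV[R]_4) : R := (x *m y^T) 0 0.

Definition v0 : 'I_4 := inord 0.
Definition v1 : 'I_4 := inord 1.
Definition v2 : 'I_4 := inord 2.
Definition v3 : 'I_4 := inord 3.

Definition sph_tetra_data (p : 'I_4 -> 'rV[R]_4) : Prop :=
  (forall i, dotv (p i) (p i) = 1) /\ row_free (\matrix_(i < 4) p i).

Definition sph_tetra (p : 'I_4 -> 'rV[R]_4) : set 'rV[R]_4 :=
  [set x | dotv x x = 1 /\
     exists lam : 'I_4 -> R, (forall i, 0 <= lam i) /\ x = \sum_(i < 4) lam i *: p i].

(* M (acting on row vectors by x |-> x *m M) is the rotation through pi about the
   great circle S^3 ∩ span(a, b): it is orthogonal, fixes span(a,b) pointwise and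
   acts as -1 on its orthogonal complement. *)
Definition half_turn_about (M : 'M[R]_4) (a b : 'rV[R]_4) : Prop :=
  M *m M^T = 1%:M /\ a *m M = a /\ b *m M = b /\
  (forall x, dotv x a = 0 -> dotv x b = 0 -> x *m M = - x).

(* Z2-symmetry: T invariant under the rotation through pi about the axis through the
   midpoints of the edges p0p1 and p2p3 (the midpoints are the normalisations of
   p0 + p1 and p2 + p3, so the axis is S^3 ∩ span(p0 + p1, p2 + p3)). *)
Definition Z2_symmetric (p : 'I_4 -> 'rV[R]_4) : Prop :=
  exists M : 'M[R]_4, half_turn_about M (p v0 + p v1) (p v2 + p v3) /\
    (fun x => x *m M) @` sph_tetra p = sph_tetra p.

Definition edge_matrix (p : 'I_4 -> 'rV[R]_4) : 'M[R]_4 :=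
  \matrix_(i < 4, j < 4) dotv (p i) (p j).

Definition edge_len (p : 'I_4 -> 'rV[R]_4) (i j : 'I_4) : R := acos (dotv (p i) (p j)).

Definition principal_param (p : 'I_4 -> 'rV[R]_4) : R :=
  Num.sqrt (cofactor (edge_matrix p) v0 v0 * cofactor (edge_matrix p) v2 v2
            / \det (edge_matrix p)).

End SphTetra.

(* Main.v *)
Require Import Defs.
From HB Require Import structures.
From mathcomp Require Import all_boot all_order all_algebra.
From mathcomp Require Import all_classical all_reals all_analysis.
From mathcomp Require Import ring lra.
Import Order.TTheory GRing.Theory Num.Theory.
Local Open Scope ring_scope.

Lemma dotvE {R : realType} (x y : 'rV[R]_4) : dotv x y = \sum_k x 0 k * y 0 k.
Proof. by rewrite /dotv !mxE; apply: eq_bigr => k _; rewrite mxE. Qed.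

Lemma dotvC {R : realType} (x y : 'rV[R]_4) : dotv x y = dotv y x.
Proof. by rewrite !dotvE; apply: eq_bigr => k _; rewrite mulrC. Qed.

Lemma dotvDl {R : realType} (x y z : 'rV[R]_4) : dotv (x + y) z = dotv x z + dotv y z.
Proof. by rewrite !dotvE -big_split; apply: eq_bigr => k _; rewrite mxE mulrDl. Qed.

Lemma dotvZl {R : realType} a (x z : 'rV[R]_4) : dotv (a *: x) z = a * dotv x z.
Proof. by rewrite !dotvE mulr_sumr; apply: eq_bigr => k _; rewrite mxE mulrA. Qed.

Lemma dotvNl {R : realType} (x z : 'rV[R]_4) : dotv (- x) z = - dotv x z.
Proof. by rewrite -scaleN1r dotvZl mulN1r. Qed.

Lemma dotvDr {R : realType} (x y z : 'rV[R]_4) : dotv z (x + y) = dotv z x + dotv z y.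
Proof. by rewrite dotvC dotvDl !(dotvC z). Qed.

Lemma dotvZr {R : realType} a (x z : 'rV[R]_4) : dotv z (a *: x) = a * dotv z x.
Proof. by rewrite dotvC dotvZl dotvC. Qed.

Lemma dotvNr {R : realType} (x z : 'rV[R]_4) : dotv z (- x) = - dotv z x.
Proof. by rewrite dotvC dotvNl dotvC. Qed.

Lemma dotv_ge0 {R : realType} (x : 'rV[R]_4) : 0 <= dotv x x.
Proof. by rewrite dotvE; apply: sumr_ge0 => k _; rewrite -expr2 sqr_ge0. Qed.

Lemma mulr_ge0_ge0 {R : realType} (x : 'rV[R]_4) i : 0 <= x 0 i * x 0 i.
Proof. by rewrite -expr2 sqr_ge0. Qed.

Lemma dotv_eq0 {R : realType} (x : 'rV[R]_4) : dotv x x = 0 -> x = 0.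
Proof.
rewrite dotvE => /psumr_eq0P H; apply/rowP => k; rewrite mxE.
have /eqP := H (fun i _ => mulr_ge0_ge0 x i) k isT.
by rewrite mulf_eq0 orbb => /eqP.
Qed.

Lemma dotv_mulmx {R : realType} (M : 'M[R]_4) (x y : 'rV[R]_4) :
  M *m M^T = 1%:M -> dotv (x *m M) (y *m M) = dotv x y.
Proof. by move=> HM; rewrite /dotv trmx_mul mulmxA -(mulmxA x) HM mulmx1. Qed.

Definition pmx {R : realType} (p : 'I_4 -> 'rV[R]_4) : 'M[R]_4 := \matrix_(i < 4) p i.

Lemma indep {R : realType} {p : 'I_4 -> 'rV[R]_4} : sph_tetra_data p ->
  forall c : 'I_4 -> R, \sum_i c i *: p i = 0 -> forall i, c i = 0.
Proof.
move=> [_ Hf] c Hc i.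
have H : (\row_j c j) *m pmx p = 0 *m pmx p.
  rewrite mul0mx mulmx_sum_row -[RHS]Hc; apply: eq_bigr => j _.
  by rewrite /pmx rowK mxE.
have := row_free_inj Hf H => /rowP /(_ i).
by rewrite !mxE.
Qed.

Lemma indep_eq {R : realType} {p : 'I_4 -> 'rV[R]_4} : sph_tetra_data p ->
  forall c d : 'I_4 -> R, \sum_i c i *: p i = \sum_i d i *: p i -> forall i, c i = d i.
Proof.
move=> Hd c d H i; apply/eqP; rewrite -subr_eq0; apply/eqP.
apply: (indep Hd (fun i => c i - d i) _ i).
by under eq_bigr do rewrite scalerBl; rewrite sumrB H subrr.
Qed.

Lemma sum_ind {R : realType} (p : 'I_4 -> 'rV[R]_4) k :
  \sum_i (i == k)%:R *: p i = p k.
Proof.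
rewrite (bigD1 k) //= eqxx scale1r big1 ?addr0 // => i /negPf ->.
by rewrite scale0r.
Qed.

Lemma p_in_T {R : realType} {p : 'I_4 -> 'rV[R]_4} : sph_tetra_data p ->
  forall j, sph_tetra p (p j).
Proof.
move=> [Hn _] j; split; first exact: Hn.
by exists (fun i => (i == j)%:R); split => [i|]; rewrite ?ler0n // sum_ind.
Qed.

Lemma ext_ray {R : realType} (p : 'I_4 -> 'rV[R]_4) (M : 'M[R]_4) :
  sph_tetra_data p -> M *m M^T = 1%:M ->
  (forall x, sph_tetra p x -> sph_tetra p (x *m M)) ->
  (forall x, sph_tetra p x -> sph_tetra p (x *m M^T)) ->
  forall j, exists k, p j *m M = p k.
Proof.
move=> Hd HM H1 H2 j.
have HMT : M^T *m M = 1%:M := mulmx1C HM.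
have [_ [lam [lam0 Hl]]] := H1 _ (p_in_T Hd j).
have /choice [nu Hnu] : forall k, exists nu : 'I_4 -> R,
    (forall l, 0 <= nu l) /\ p k *m M^T = \sum_l nu l *: p l.
  by move=> k; have [_ [nu [? ?]]] := H2 _ (p_in_T Hd k); exists nu.
have Hq : forall k, dotv (p k *m M^T) (p k *m M^T) = 1.
  by move=> k; have [? _] := H2 _ (p_in_T Hd k).
have Hj : p j = \sum_k lam k *: (p k *m M^T).
  transitivity (p j *m M *m M^T); first by rewrite -mulmxA HM mulmx1.
  by rewrite Hl mulmx_suml; apply: eq_bigr => k _; rewrite scalemxAl.
have Hj' : p j = \sum_l (\sum_k lam k * nu k l) *: p l.
  rewrite {1}Hj.
  under [RHS]eq_bigr => l _ do rewrite scaler_suml.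
  rewrite [RHS]exchange_big /=; apply: eq_bigr => k _.
  rewrite (proj2 (Hnu k)) scaler_sumr; apply: eq_bigr => l _; by rewrite scalerA.
have Hc : forall l, \sum_k lam k * nu k l = (l == j)%:R.
  by apply: (indep_eq Hd); rewrite -Hj' sum_ind.
have [k Hk] : exists k, lam k * nu k j != 0.
  case: (boolP [exists k, lam k * nu k j != 0]) => [/existsP[k Hk] | /existsPn Hn].
    by exists k.
  have := Hc j; rewrite eqxx big1 => [/esym/eqP|k _]; first by rewrite oner_eq0.
  by apply/eqP; have := Hn k; rewrite negbK.
have Hl0 : lam k != 0 by apply: contraNneq Hk => ->; rewrite mul0r.
have Hnl : forall l, l != j -> nu k l = 0.
  move=> l Hlj; have := Hc l; rewrite (negPf Hlj) => /psumr_eq0P H.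
  have /eqP := H (fun k _ => mulr_ge0 (lam0 k) (proj1 (Hnu k) l)) k isT.
  by rewrite mulf_eq0 (negPf Hl0) /= => /eqP.
have Hpk : p k *m M^T = nu k j *: p j.
  rewrite (proj2 (Hnu k)) (bigD1 j) //= big1 ?addr0 // => l Hlj.
  by rewrite Hnl ?scale0r.
have Hnu1 : nu k j = 1.
  have := Hq k; rewrite Hpk dotvZl dotvZr (proj1 Hd) mulr1 => H.
  have := proj1 (Hnu k) j; nra.
exists k; rewrite -[p k]mulmx1 -HMT mulmxA Hpk Hnu1 scale1r //.
Qed.

Lemma vval0 : nat_of_ord v0 = 0%N. Proof. by rewrite /v0 inordK. Qed.
Lemma vval1 : nat_of_ord v1 = 1%N. Proof. by rewrite /v1 inordK. Qed.
Lemma vval2 : nat_of_ord v2 = 2%N. Proof. by rewrite /v2 inordK. Qed.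
Lemma vval3 : nat_of_ord v3 = 3%N. Proof. by rewrite /v3 inordK. Qed.

Lemma sum4 {V : nmodType} (F : 'I_4 -> V) : \sum_i F i = F v0 + F v1 + F v2 + F v3.
Proof.
rewrite !big_ord_recl big_ord0 addr0 !addrA.
by congr (_ + _ + _ + _); congr F; apply: val_inj;
  rewrite /= ?vval0 ?vval1 ?vval2 ?vval3 /bump.
Qed.

Lemma comb4 {R : realType} (p : 'I_4 -> 'rV[R]_4) s t :
  s *: (p v0 + p v1) + t *: (p v2 + p v3) =
  \sum_i (if (val i < 2)%N then s else t) *: p i.
Proof. by rewrite sum4 /= vval0 vval1 vval2 vval3 /= !scalerDr !addrA. Qed.

Lemma pair_eq {R : realType} {p : 'I_4 -> 'rV[R]_4} : sph_tetra_data p ->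
  forall a b x y, x != y -> p a + p b = p x + p y ->
  (a = x /\ b = y) \/ (a = y /\ b = x).
Proof.
move=> Hd a b x y Hxy H.
have E : forall u v : 'I_4, \sum_i ((i == u)%:R + (i == v)%:R) *: p i = p u + p v.
  move=> u v; rewrite -(sum_ind p u) -(sum_ind p v) -big_split.
  by apply: eq_bigr => i _; rewrite scalerDl.
have Hc := indep_eq Hd (fun i => (i == a)%:R + (i == b)%:R)
   (fun i => (i == x)%:R + (i == y)%:R) ltac:(by rewrite !E).
have Hn : forall i, ((i == a) + (i == b) = (i == x) + (i == y))%N.
  move=> i; apply/eqP; rewrite -(eqr_nat R) !natrD; apply/eqP; exact: Hc i.
have Hyx : (y == x) = false by rewrite eq_sym (negPf Hxy).
case: (eqVneq a x) => [Eax | Hax].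
  left; split => //; have := Hn y; rewrite Eax Hyx eqxx /=.
  by case: (eqVneq y b).
right; have := Hn a; rewrite eqxx eq_sym (negPf Hax).
case: (eqVneq a y) => [Eay _ | Hay]; last by case: (a == b).
split => //; have := Hn x; rewrite Eay eq_sym Hyx eqxx /=.
by case: (eqVneq x b).
Qed.

Lemma fld1 {R : realType} (xa xb aa bb ab g : R) : g = aa * bb - ab ^+ 2 -> g != 0 ->
  xa - ((xa * bb - xb * ab) / g * aa + (xb * aa - xa * ab) / g * ab) = 0.
Proof. by move=> -> H; field. Qed.

Lemma fld2 {R : realType} (xa xb aa bb ab g : R) : g = aa * bb - ab ^+ 2 -> g != 0 ->
  xb - ((xa * bb - xb * ab) / g * ab + (xb * aa - xa * ab) / g * bb) = 0.
Proof. by move=> -> H; field. Qed.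

Lemma span_fix {R : realType} (M : 'M[R]_4) (a b x : 'rV[R]_4) :
  half_turn_about M a b ->
  (forall s t, s *: a + t *: b = 0 -> s = 0 /\ t = 0) ->
  x *m M = x -> exists s t, x = s *: a + t *: b.
Proof.
move=> [_ [Ha [Hb Hn]]] Hab Hx.
have Eba : dotv b a = dotv a b by rewrite dotvC.
pose aa := dotv a a; pose bb := dotv b b; pose ab := dotv a b.
pose g := aa * bb - ab ^+ 2.
have g0 : g != 0.
  apply/eqP => g0.
  pose w := bb *: a + (- ab) *: b.
  have : dotv w w = 0.
    rewrite /w !dotvDl !dotvDr !dotvZl !dotvZr Eba -/aa -/bb -/ab.
    transitivity (bb * g); first by rewrite /g; ring.
    by rewrite g0 mulr0.
  move/dotv_eq0/Hab => [bb0 _].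
  have /Hab [_] : 0 *: a + 1 *: b = 0.
    by rewrite scale0r add0r scale1r; apply: dotv_eq0.
  by move/eqP; rewrite oner_eq0.
pose xa := dotv x a; pose xb := dotv x b.
pose s := (xa * bb - xb * ab) / g; pose t := (xb * aa - xa * ab) / g.
pose z := x - (s *: a + t *: b).
have za : dotv z a = 0.
  rewrite /z dotvDl dotvNl dotvDl !dotvZl Eba -/aa -/ab -/xa /s /t.
  by apply: fld1.
have zb : dotv z b = 0.
  rewrite /z dotvDl dotvNl dotvDl !dotvZl -/bb -/ab -/xb /s /t.
  by apply: fld2.
have zM : z *m M = z.
  by rewrite /z mulmxBl mulmxDl -!scalemxAl Ha Hb Hx.
have z0 : z = 0.
  apply: dotv_eq0; have := Hn z za zb; rewrite zM => Ez.
  have : dotv z z = - dotv z z by rewrite {2}Ez dotvNr.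
  move/eqP; rewrite -subr_eq0 opprK -mulr2n mulrn_eq0 /= => /eqP //.
exists s, t; apply/eqP; rewrite -subr_eq0; apply/eqP; exact: z0.
Qed.

Lemma no_span {R : realType} {p : 'I_4 -> 'rV[R]_4} : sph_tetra_data p ->
  forall (j j' : 'I_4) s t, j' != j -> (val j < 2)%N = (val j' < 2)%N ->
  p j = s *: (p v0 + p v1) + t *: (p v2 + p v3) -> False.
Proof.
move=> Hd j j' s t Hjj Hv H.
have Hc := indep_eq Hd (fun i => (i == j)%:R)
   (fun i => if (val i < 2)%N then s else t) ltac:(by rewrite sum_ind -comb4).
have := Hc j; have := Hc j'; rewrite eqxx (negPf Hjj) -Hv /= => <-.
by move/eqP; rewrite oner_eq0.
Qed.

Lemma z2_gram {R : realType} (p : 'I_4 -> 'rV[R]_4) : sph_tetra_data p -> Z2_symmetric p ->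
  dotv (p v0) (p v2) = dotv (p v1) (p v3) /\ dotv (p v0) (p v3) = dotv (p v1) (p v2).
Proof.
move=> Hd [M [HT Himg]].
have [HM [Ha [Hb Hn]]] := HT.
have H1 : forall x, sph_tetra p x -> sph_tetra p (x *m M).
  by move=> x Hx; rewrite -Himg; exists x.
have H2 : forall x, sph_tetra p x -> sph_tetra p (x *m M^T).
  move=> x; rewrite -{1}Himg => -[y Hy <-]; by rewrite -mulmxA HM mulmx1.
have [k0 E0] := ext_ray p M Hd HM H1 H2 v0.
have [k1 E1] := ext_ray p M Hd HM H1 H2 v1.
have [k2 E2] := ext_ray p M Hd HM H1 H2 v2.
have [k3 E3] := ext_ray p M Hd HM H1 H2 v3.
have Hab : forall s t, s *: (p v0 + p v1) + t *: (p v2 + p v3) = 0 -> s = 0 /\ t = 0.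
  move=> s t; rewrite comb4 => H.
  have := indep Hd _ H v0; have := indep Hd _ H v2.
  by rewrite /= vval0 vval2 /=.
have n01 : v0 != v1 by rewrite -val_eqE /= vval0 vval1.
have n23 : v2 != v3 by rewrite -val_eqE /= vval2 vval3.
have P01 : p k0 + p k1 = p v0 + p v1 by rewrite -E0 -E1 -mulmxDl Ha.
have P23 : p k2 + p k3 = p v2 + p v3 by rewrite -E2 -E3 -mulmxDl Hb.
have Hfix : forall j j', j' != j -> (val j < 2)%N = (val j' < 2)%N ->
    p j *m M = p j -> False.
  move=> j j' Hjj Hv Hj; have [s [t Hst]] := span_fix M _ _ _ HT Hab Hj.
  exact: (no_span Hd _ _ _ _ Hjj Hv Hst).
have [[Ek0 Ek1]|[Ek0 Ek1]] := pair_eq Hd _ _ _ _ n01 P01.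
  by exfalso; apply: (Hfix v0 v1); rewrite ?(eq_sym v1) ?n01 /= ?vval0 ?vval1 // E0 Ek0.
have [[Ek2 Ek3]|[Ek2 Ek3]] := pair_eq Hd _ _ _ _ n23 P23.
  by exfalso; apply: (Hfix v2 v3); rewrite ?(eq_sym v3) ?n23 /= ?vval2 ?vval3 // E2 Ek2.
rewrite -(dotv_mulmx M _ _ HM) E0 E2 Ek0 Ek2; split => //.
by rewrite -(dotv_mulmx M _ _ HM) E0 E3 Ek0 Ek3 dotvC.
Qed.

Lemma gram_pos {R : realType} (A : 'M[R]_4) i : A \in unitmx ->
  0 < \det (A *m A^T) /\ 0 < cofactor (A *m A^T) i i.
Proof.
move=> HA.
have dA : \det A != 0 by rewrite -unitfE -unitmxE.
have dG : 0 < \det (A *m A^T).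
  by rewrite det_mulmx det_tr -expr2 exprn_even_gt0 //= dA orbT.
split => //.
pose B := invmx A; pose C := B^T *m B.
have GC : A *m A^T *m C = 1%:M.
  rewrite /C mulmxA -(mulmxA A) -trmx_mul mulVmx // trmx1 mulmx1 mulmxV //.
have adjE : \adj (A *m A^T) = \det (A *m A^T) *: C.
  by rewrite -[LHS]mulmx1 -GC mulmxA mul_adj_mx mul_scalar_mx.
have -> : cofactor (A *m A^T) i i = \det (A *m A^T) * C i i.
  by have := congr1 (fun M : 'M[R]_4 => M i i) adjE; rewrite /= !mxE.
apply: mulr_gt0 => //.
have -> : C i i = \sum_k B k i ^+ 2.
  by rewrite /C !mxE; apply: eq_bigr => k _; rewrite mxE expr2.
rewrite lt0r sumr_ge0 ?andbT => [|k _]; last exact: sqr_ge0.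
apply/eqP => /psumr_eq0P H.
have : (A *m B) i i = 0.
  rewrite !mxE big1 // => k _.
  by have /eqP := H (fun k _ => sqr_ge0 _) k isT; rewrite sqrf_eq0 => /eqP ->; rewrite mulr0.
by rewrite mulmxV // mxE eqxx => /eqP; rewrite oner_eq0.
Qed.

Definition d3 {R : realType} (a b c d e f g h i : R) :=
  a * (e * i - f * h) - b * (d * i - f * g) + c * (d * h - e * g).

Definition d4 {R : realType} (f : nat -> nat -> R) :=
  f 0 0 * d3 (f 1 1) (f 1 2) (f 1 3) (f 2 1) (f 2 2) (f 2 3) (f 3 1) (f 3 2) (f 3 3)
  - f 0 1 * d3 (f 1 0) (f 1 2) (f 1 3) (f 2 0) (f 2 2) (f 2 3) (f 3 0) (f 3 2) (f 3 3)
  + f 0 2 * d3 (f 1 0) (f 1 1) (f 1 3) (f 2 0) (f 2 1) (f 2 3) (f 3 0) (f 3 1) (f 3 3)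
  - f 0 3 * d3 (f 1 0) (f 1 1) (f 1 2) (f 2 0) (f 2 1) (f 2 2) (f 3 0) (f 3 1) (f 3 2).

Lemma det3E {R : realType} (f : nat -> nat -> R) :
  \det (\matrix_(i < 3, j < 3) f i j) =
  d3 (f 0 0) (f 0 1) (f 0 2) (f 1 0) (f 1 1) (f 1 2) (f 2 0) (f 2 1) (f 2 2).
Proof.
rewrite /d3 (expand_det_row _ ord0) !big_ord_recl big_ord0 /cofactor.
rewrite !(expand_det_row _ ord0) !big_ord_recl !big_ord0 /cofactor !det_mx11 !mxE /bump /=.
ring.
Qed.

Lemma det4E {R : realType} (f : nat -> nat -> R) :
  \det (\matrix_(i < 4, j < 4) f i j) = d4 f.
Proof.
rewrite /d4 /d3 (expand_det_row _ ord0) !big_ord_recl big_ord0 /cofactor.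
rewrite !(expand_det_row _ ord0) !big_ord_recl !big_ord0 /cofactor.
rewrite !(expand_det_row _ ord0) !big_ord_recl !big_ord0 /cofactor !det_mx11 !mxE /bump /=.
ring.
Qed.

Lemma cofE {R : realType} (f : nat -> nat -> R) (h : 'I_4) :
  cofactor (\matrix_(i < 4, j < 4) f i j) h h =
  \det (\matrix_(i < 3, j < 3) f (bump h i) (bump h j)).
Proof.
rewrite /cofactor.
have -> : (-1) ^+ (h + h) = 1 :> R by rewrite -signr_odd addnn odd_double.
by rewrite mul1r; congr (\det _); apply/matrixP => i j; rewrite !mxE.
Qed.

Lemma dot_bound {R : realType} (x y : 'rV[R]_4) : dotv x x = 1 -> dotv y y = 1 ->
  -1 <= dotv x y <= 1.
Proof.
move=> Hx Hy.
have := dotv_ge0 (x + y); have := dotv_ge0 (x - y).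
rewrite !dotvDl !dotvDr !dotvNl !dotvNr Hx Hy (dotvC y x) => H1 H2.
apply/andP; split; lra.
Qed.

Lemma trig_ap {R : realType} (l1 l2 : R) :
  2 * (cos ((l1 + l2) / 2) * cos ((l1 - l2) / 2)) = cos l1 + cos l2 /\
  cos ((l1 + l2) / 2) ^+ 2 + cos ((l1 - l2) / 2) ^+ 2 = 1 + cos l1 * cos l2.
Proof.
set x := (l1 + l2) / 2; set y := (l1 - l2) / 2.
have E1 : l1 = x + y by rewrite /x /y; field.
have E2 : l2 = x - y by rewrite /x /y; field.
rewrite E1 E2 cosD cosB; split; first by ring.
have -> : 1 + (cos x * cos y - sin x * sin y) * (cos x * cos y + sin x * sin y)
  = 1 + cos x ^+ 2 * cos y ^+ 2 - sin x ^+ 2 * sin y ^+ 2 by ring.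
rewrite !sin2cos2; ring.
Qed.

Lemma final_alg {R : realType} (f : nat -> nat -> R) (ap am b c : R) :
  f 0 0 = 1 -> f 1 1 = 1 -> f 2 2 = 1 -> f 3 3 = 1 ->
  f 1 0 = f 0 1 -> f 2 0 = f 0 2 -> f 3 0 = f 0 3 ->
  f 2 1 = f 0 3 -> f 1 2 = f 0 3 -> f 3 1 = f 0 2 -> f 1 3 = f 0 2 -> f 3 2 = f 2 3 ->
  b = f 0 2 -> c = f 0 3 ->
  2 * (ap * am) = f 0 1 + f 2 3 -> ap ^+ 2 + am ^+ 2 = 1 + f 0 1 * f 2 3 ->
  (ap + am + b + c) * (ap + am - b - c) * (ap - am - b + c) * (ap - am + b - c) = d4 f /\
  4 * (ap * am - b * c) * (ap * b - am * c) * (ap * c - am * b) =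
    d4 f - d3 (f 1 1) (f 1 2) (f 1 3) (f 2 1) (f 2 2) (f 2 3) (f 3 1) (f 3 2) (f 3 3)
         * d3 (f 0 0) (f 0 1) (f 0 3) (f 1 0) (f 1 1) (f 1 3) (f 3 0) (f 3 1) (f 3 3).
Proof.
move=> h00 h11 h22 h33 h10 h20 h30 h21 h12 h31 h13 h32 hb hc hP hQ.
have -> : (ap + am + b + c) * (ap + am - b - c) * (ap - am - b + c) * (ap - am + b - c)
  = ((ap ^+ 2 + am ^+ 2) + 2 * (ap * am) - (b + c) ^+ 2) *
    ((ap ^+ 2 + am ^+ 2) - 2 * (ap * am) - (b - c) ^+ 2) by ring.
have -> : 4 * (ap * am - b * c) * (ap * b - am * c) * (ap * c - am * b)
  = (2 * (ap * am) - 2 * b * c) *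
    (2 * b * c * (ap ^+ 2 + am ^+ 2) - 2 * (ap * am) * (b ^+ 2 + c ^+ 2)) by ring.
rewrite hP hQ hb hc /d4 /d3 h00 h11 h22 h33 h10 h20 h30 h21 h12 h31 h13 h32.
by split; ring.
Qed.

Theorem lemma2 (R : realType) (p : 'I_4 -> 'rV[R]_4) :
  sph_tetra_data p -> Z2_symmetric p ->
  let lA := edge_len p v0 v1 in
  let lB := edge_len p v0 v2 in
  let lC := edge_len p v0 v3 in
  let lD := edge_len p v2 v3 in
  let ap := cos ((lA + lD) / 2) in
  let am := cos ((lA - lD) / 2) in
  let b := cos lB in
  let c := cos lC in
  let Delta := (ap + am + b + c) * (ap + am - b - c) * (ap - am - b + c) * (ap - am + b - c) in
  let u := principal_param p in
  0 < u /\
  u ^+ 2 + 4 * (ap * am - b * c) * (ap * b - am * c) * (ap * c - am * b) / Delta = 1.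
Proof.
move=> Hd HZ lA lB lC lD ap am b c Delta u.
pose F := fun n m : nat => dotv (p (inord n)) (p (inord m)).
have GE : edge_matrix p = \matrix_(i < 4, j < 4) F i j.
  by apply/matrixP => i j; rewrite !mxE /F !inord_val.
have HA : pmx p \in unitmx by rewrite -row_free_unit; case: Hd.
have GA : edge_matrix p = pmx p *m (pmx p)^T.
  apply/matrixP => i j; rewrite !mxE dotvE; apply: eq_bigr => k _.
  by rewrite !mxE.
have [dpos c0pos] := gram_pos _ v0 HA.
have [_ c2pos] := gram_pos _ v2 HA.
rewrite -GA GE in dpos c0pos c2pos.
rewrite cofE (det3E (fun i j => F (bump v0 i) (bump v0 j))) /= vval0 /bump /= in c0pos.
rewrite cofE (det3E (fun i j => F (bump v2 i) (bump v2 j))) /= vval2 /bump /= in c2pos.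
rewrite det4E in dpos.
have [Hn _] := Hd.
have Fii : forall n, (n < 4)%N -> F n n = 1 by move=> n _; rewrite /F Hn.
have Fs : forall n m, F n m = F m n by move=> n m; rewrite /F dotvC.
have [Z1 Z2] := z2_gram p Hd HZ.
have Fb : forall n m, (n < 4)%N -> (m < 4)%N -> -1 <= F n m <= 1.
  by move=> n m _ _; apply: dot_bound; rewrite Hn.
have cosF : forall n m, (n < 4)%N -> (m < 4)%N -> cos (acos (F n m)) = F n m.
  by move=> n m hn hm; rewrite acosK // in_itv /= Fb.
have hA : cos lA = F 0 1 by rewrite /lA /edge_len cosF.
have hD : cos lD = F 2 3 by rewrite /lD /edge_len cosF.
have hb : b = F 0 2 by rewrite /b /lB /edge_len cosF.
have hc : c = F 0 3 by rewrite /c /lC /edge_len cosF.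
have [hP hQ] := trig_ap lA lD.
rewrite hA hD -/ap -/am in hP hQ.
have [hDel hX] := @final_alg _ F ap am b c (Fii 0%N isT) (Fii 1%N isT) (Fii 2%N isT) (Fii 3%N isT)
  (Fs 1%N 0%N) (Fs 2%N 0%N) (Fs 3%N 0%N)
  (etrans (Fs 2%N 1%N) (esym Z2)) (esym Z2) (etrans (Fs 3%N 1%N) (esym Z1)) (esym Z1)
  (Fs 3%N 2%N) hb hc hP hQ.
have uE : u = Num.sqrt (d3 (F 1 1) (F 1 2) (F 1 3) (F 2 1) (F 2 2) (F 2 3) (F 3 1) (F 3 2) (F 3 3)
    * d3 (F 0 0) (F 0 1) (F 0 3) (F 1 0) (F 1 1) (F 1 3) (F 3 0) (F 3 1) (F 3 3) / d4 F).
  rewrite /u /principal_param GE !cofE (det3E (fun i j => F (bump v0 i) (bump v0 j)))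
    (det3E (fun i j => F (bump v2 i) (bump v2 j))) det4E /= vval0 vval2 /bump /=.
  reflexivity.
have qpos : 0 < d3 (F 1 1) (F 1 2) (F 1 3) (F 2 1) (F 2 2) (F 2 3) (F 3 1) (F 3 2) (F 3 3)
    * d3 (F 0 0) (F 0 1) (F 0 3) (F 1 0) (F 1 1) (F 1 3) (F 3 0) (F 3 1) (F 3 3) / d4 F.
  by apply: divr_gt0 => //; apply: mulr_gt0; [exact: c0pos | exact: c2pos].
split; first by rewrite uE sqrtr_gt0.
rewrite uE sqr_sqrtr ?ltW // /Delta hDel hX.
have : d4 F != 0 by rewrite gt_eqF.
move: (d4 F) => D HD; field.
exact: HD.
Qed.
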